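(* Let $\Theta=(\alpha,\rho_r,\rho_d,\rho_s,\rho_0,T)$ with $\alpha>1$, $\rho_r,\rho_d,\rho_s,\rho_0>0$, $T>1$, and $K_{max}(\Theta):=\min\big(\frac T4,\frac{\rho_r}{3\rho_0},\frac{3\rho_d}{2\rho_0}\big)>10$. Let $0<R_1<R_2<R_{max}(\Theta)$ be such that $\rho_r<\frac{\alpha}{(1+\rho_d/\rho_r)^2}\frac{g^2(R_i)}{R_i}$ for $i=1,2$. Then $\zeta'_{csi}(R_1,\Theta)<\zeta'_{csi}(R_2,\Theta)$.
   Context: $g(x)=\sqrt{\frac{x}{2^x-1}}\big(2^x x\ln2-2^x+1\big)$, $x>0$. $R_{max}(\Theta)=c(\Theta)K_{max}(\Theta)$ where $c(\Theta)>0$ is the unique positive solution of $g(c)/\sqrt c=(1+\rho_d/\rho_r)\sqrt{K_{max}(\Theta)\rho_r/\alpha}$. For $R>0$ and real $M>K\ge1$, $\frac{1}{\zeta_{csi}(M,K,R,\Theta)}=\frac1R\big[\frac{\alpha K}{M-K}(2^{R/K}-1)+M\rho_r+K\rho_d+\rho_s\big]$, and $\zeta'_{csi}(R,\Theta)$ is the maximum of $\zeta_{csi}(M,K,R,\Theta)$ over real $(M,K)$ with $1\le K\le K_{max}(\Theta)$, $M>K$. *)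

(* Defs.v *)
From Stdlib Require Import Reals.
From Coquelicot Require Import Coquelicot.
Open Scope R_scope.

Definition g (x : R) : R :=
  sqrt (x / (Rpower 2 x - 1)) * (Rpower 2 x * x * ln 2 - Rpower 2 x + 1).

Definition Kmax (rho_r rho_d rho_0 T : R) : R :=
  Rmin (T / 4) (Rmin (rho_r / (3 * rho_0)) (3 * rho_d / (2 * rho_0))).

Definition c_eq (alpha rho_r rho_d rho_0 T c : R) : Prop :=
  0 < c /\
  g c / sqrt c = (1 + rho_d / rho_r) * sqrt (Kmax rho_r rho_d rho_0 T * rho_r / alpha).

Definition zeta_csi (alpha rho_r rho_d rho_s M K Rt : R) : R :=
  / ((1 / Rt) * (alpha * K / (M - K) * (Rpower 2 (Rt / K) - 1)
                 + M * rho_r + K * rho_d + rho_s)).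

Definition zeta'_csi (alpha rho_r rho_d rho_s rho_0 T Rt : R) : Rbar :=
  Lub_Rbar (fun z => exists M K,
    1 <= K /\ K <= Kmax rho_r rho_d rho_0 T /\ K < M /\
    z = zeta_csi alpha rho_r rho_d rho_s M K Rt).

(* Main.v *)
Require Import Defs.
From Stdlib Require Import Reals Lra.
From Coquelicot Require Import Coquelicot.
Open Scope R_scope.

Lemma ln2_pos : 0 < ln 2.
Proof. rewrite <- ln_1; apply ln_increasing; lra. Qed.

Lemma pow2_lb (y : R) : 1 + y * ln 2 <= Rpower 2 y.
Proof. unfold Rpower; apply exp_ineq1_le. Qed.

Lemma pow2_gt1 (y : R) : 0 < y -> 1 < Rpower 2 y.
Proof. intros Hy; pose proof (pow2_lb y); pose proof ln2_pos;
  assert (0 < y * ln 2) by (apply Rmult_lt_0_compat; lra); lra. Qed.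

Definition W (a rr rd rs K Rt : R) : R :=
  Rt / (2 * sqrt (a * rr * K * (Rpower 2 (Rt / K) - 1)) + K * (rr + rd) + rs).

Lemma W_den_pos a rr rd rs K Rt : 0 < rr -> 0 < rd -> 0 < rs -> 0 < K ->
  0 < 2 * sqrt (a * rr * K * (Rpower 2 (Rt / K) - 1)) + K * (rr + rd) + rs.
Proof. intros. pose proof (sqrt_pos (a * rr * K * (Rpower 2 (Rt / K) - 1))).
  assert (0 < K * (rr+rd)) by (apply Rmult_lt_0_compat; lra). lra. Qed.

Lemma zeta_le_W a rr rd rs M K Rt : 0 < a -> 0 < rr -> 0 < rd -> 0 < rs ->
  1 <= K -> K < M -> 0 < Rt -> zeta_csi a rr rd rs M K Rt <= W a rr rd rs K Rt.
Proof.
  intros Ha Hr Hd Hs HK HM HR. unfold zeta_csi, W.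
  set (E := Rpower 2 (Rt / K) - 1).
  assert (HE : 0 < E) by (unfold E; pose proof (pow2_gt1 (Rt/K)); 
     assert (0 < Rt / K) by (apply Rdiv_lt_0_compat; lra); specialize (H H0); lra).
  set (S := sqrt (a * rr * K * E)).
  assert (HS2 : S ^ 2 = a * rr * K * E) by (unfold S; simpl; rewrite Rmult_1_r; apply sqrt_sqrt;
     repeat apply Rmult_le_pos; lra).
  assert (HSp : 0 <= S) by apply sqrt_pos.
  assert (Hf : a * K / (M - K) * E + M * rr + K * rd + rs
     = (S - (M - K) * rr) * (S - (M - K) * rr) / (rr * (M - K)) + (2 * S + K * (rr + rd) + rs)).
  { field_simplify; [| lra | lra]. rewrite HS2. field. assert (0 < rr * (M - K)) by (apply Rmult_lt_0_compat; lra). nra. }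
  rewrite Hf.
  set (Q := (S - (M - K) * rr) * (S - (M - K) * rr) / (rr * (M - K))).
  assert (0 <= Q).
  { apply Rdiv_le_0_compat. apply Rle_0_sqr. apply Rmult_lt_0_compat; lra. }
  pose proof (W_den_pos a rr rd rs K Rt Hr Hd Hs ltac:(lra)). fold E S in H0.
  set (D := 2 * S + K * (rr + rd) + rs) in *.
  replace (/ (1 / Rt * (Q + D))) with (Rt / (Q + D)) by (field; lra).
  apply Rmult_le_compat_l; [lra|]. apply Rinv_le_contravar; lra.
Qed.

Lemma zeta_opt a rr rd rs K Rt : 0 < a -> 0 < rr -> 0 < rd -> 0 < rs ->
  1 <= K -> 0 < Rt -> exists M, K < M /\ zeta_csi a rr rd rs M K Rt = W a rr rd rs K Rt.
Proof.
  intros Ha Hr Hd Hs HK HR.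
  set (E := Rpower 2 (Rt / K) - 1).
  assert (HE : 0 < E) by (unfold E; pose proof (pow2_gt1 (Rt/K)); 
     assert (0 < Rt / K) by (apply Rdiv_lt_0_compat; lra); specialize (H H0); lra).
  set (u := sqrt (a * K * E / rr)).
  assert (Hu : 0 < u) by (apply sqrt_lt_R0; apply Rdiv_lt_0_compat; [repeat apply Rmult_lt_0_compat|]; lra).
  assert (Hu2 : u ^ 2 = a * K * E / rr) by (unfold u; simpl; rewrite Rmult_1_r; apply sqrt_sqrt;
     apply Rdiv_le_0_compat; [repeat apply Rmult_le_pos|]; lra).
  assert (HS : sqrt (a * rr * K * E) = u * rr).
  { replace (a * rr * K * E) with ((u * rr) ^ 2).
    apply sqrt_pow2. apply Rmult_le_pos; lra.
    rewrite Rpow_mult_distr, Hu2. field. lra. }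
  exists (K + u). split; [lra|].
  unfold zeta_csi, W. fold E. rewrite HS.
  replace (K + u - K) with u by ring.
  assert (Hau : a * K / u * E = u * rr).
  { apply (Rmult_eq_reg_r u); [|lra]. field_simplify; [|lra].
    replace (u^2) with (a * K * E / rr). field. lra. }
  rewrite Hau.
  assert (0 < K * (rr + rd)) by (apply Rmult_lt_0_compat; lra).
  assert (0 < u * rr) by (apply Rmult_lt_0_compat; lra).
  field. split; lra.
Qed.

Lemma W_scale a rr rd rs K Rt s : 0 <= a -> 0 < rr -> 0 < rd -> 0 < rs ->
  0 < K -> 0 < Rt -> 1 <= s ->
  W a rr rd rs K Rt <= W a rr rd rs (s * K) (s * Rt) /\
  (1 < s -> W a rr rd rs K Rt < W a rr rd rs (s * K) (s * Rt)).
Proof.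
  intros Ha Hr Hd Hs HK HR H1.
  unfold W. replace (s * Rt / (s * K)) with (Rt / K) by (field; lra).
  set (X := a * rr * K * (Rpower 2 (Rt / K) - 1)).
  replace (a * rr * (s * K) * (Rpower 2 (Rt / K) - 1)) with (s * X) by (unfold X; ring).
  assert (HX : 0 <= X).
  { unfold X. destruct (Req_dec Rt 0); [lra|].
    pose proof (pow2_gt1 (Rt/K) ltac:(apply Rdiv_lt_0_compat; lra)).
    repeat apply Rmult_le_pos; lra. }
  rewrite sqrt_mult_alt by lra.
  assert (Hss : sqrt s <= s).
  { pose proof (sqrt_sqrt s ltac:(lra)). assert (1 <= sqrt s).
    { rewrite <- sqrt_1. apply sqrt_le_1_alt; lra. } nra. }
  pose proof (sqrt_pos X).
  assert (0 < K * (rr + rd)) by (apply Rmult_lt_0_compat; lra).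
  set (D := 2 * sqrt X + K * (rr + rd) + rs).
  assert (HD : 0 < D) by (unfold D; lra).
  assert (Hle : 2 * (sqrt s * sqrt X) + s * K * (rr + rd) + rs <= s * D - (s - 1) * rs).
  { unfold D. assert (sqrt s * sqrt X <= s * sqrt X) by (apply Rmult_le_compat_r; lra). nra. }
  assert (HD' : 0 < 2 * (sqrt s * sqrt X) + s * K * (rr + rd) + rs).
  { pose proof (sqrt_pos s). assert (0 <= sqrt s * sqrt X) by (apply Rmult_le_pos; lra).
    assert (0 < s * K * (rr + rd)) by (apply Rmult_lt_0_compat; nra). lra. }
  replace (Rt / D) with (s * Rt / (s * D)) by (field; lra).
  split.
  - unfold Rdiv. apply Rmult_le_compat_l; [nra|]. apply Rinv_le_contravar; [lra|nra].
  - intros Hs1. unfold Rdiv. apply Rmult_lt_compat_l; [nra|]. apply Rinv_lt_contravar; [|nra].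
    apply Rmult_lt_0_compat; nra.
Qed.

Definition phi (y : R) := Rpower 2 y * y * ln 2 - Rpower 2 y + 1.

Lemma G_cont y : 0 < y -> continuity_pt (fun x => g x / sqrt x) y.
Proof.
  intros Hy. apply continuity_pt_filterlim. apply (ex_derive_continuous (K:=R_AbsRing) (V:=R_NormedModule) (fun x => g x / sqrt x)).
  pose proof (pow2_gt1 y Hy) as Hp. unfold Rpower in Hp.
  unfold g, Rpower. auto_derive. repeat split.
  - lra.
  - apply Rmult_lt_0_compat; [lra|]. apply Rinv_0_lt_compat; lra.
  - lra.
  - apply Rgt_not_eq, sqrt_lt_R0; lra.
Qed.

Lemma G_eq y : 0 < y -> g y / sqrt y = phi y / sqrt (Rpower 2 y - 1).
Proof.
  intros Hy. pose proof (pow2_gt1 y Hy). unfold g, phi.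
  rewrite sqrt_div by lra.
  assert (0 < sqrt y) by (apply sqrt_lt_R0; lra).
  assert (0 < sqrt (Rpower 2 y - 1)) by (apply sqrt_lt_R0; lra).
  field. lra.
Qed.

Lemma G_small y : 0 < y -> y * ln 2 <= 1 -> phi y / sqrt (Rpower 2 y - 1) <= y * ln 2.
Proof.
  intros Hy Hv. pose proof ln2_pos. set (v := y * ln 2) in *.
  assert (Hv0 : 0 < v) by (unfold v; apply Rmult_lt_0_compat; lra).
  assert (He : Rpower 2 y = exp v) by reflexivity.
  unfold phi. rewrite He.
  replace (exp v * y * ln 2 - exp v + 1) with (1 - exp v * (1 - v)) by (unfold v; ring).
  pose proof (exp_ineq1_le v).
  assert (Hphi : 1 - exp v * (1 - v) <= v * v) by nra.
  assert (Hs : v <= sqrt (exp v - 1)).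
  { assert (v <= sqrt v).
    { pose proof (sqrt_sqrt v ltac:(lra)). assert (sqrt v <= 1).
      { rewrite <- sqrt_1. apply sqrt_le_1_alt; lra. } pose proof (sqrt_pos v). nra. }
    assert (sqrt v <= sqrt (exp v - 1)) by (apply sqrt_le_1_alt; lra). lra. }
  apply (Rmult_le_reg_r (sqrt (exp v - 1))); [lra|].
  unfold Rdiv. rewrite Rmult_assoc, Rinv_l by lra. nra.
Qed.

Lemma c_prop alpha rho_r rho_d rho_0 T c y :
  0 < rho_r -> 0 < rho_d -> 0 < alpha ->
  0 < Kmax rho_r rho_d rho_0 T ->
  c_eq alpha rho_r rho_d rho_0 T c ->
  (forall c', c_eq alpha rho_r rho_d rho_0 T c' -> c' = c) ->
  0 < y -> y < c ->
  g y / sqrt y < (1 + rho_d / rho_r) * sqrt (Kmax rho_r rho_d rho_0 T * rho_r / alpha).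
Proof.
  intros Hr Hd Ha HK [Hc Hceq] Huniq Hy Hyc.
  set (C := (1 + rho_d / rho_r) * sqrt (Kmax rho_r rho_d rho_0 T * rho_r / alpha)) in *.
  assert (HC : 0 < C).
  { unfold C. apply Rmult_lt_0_compat.
    - assert (0 < rho_d / rho_r) by (apply Rdiv_lt_0_compat; lra). lra.
    - apply sqrt_lt_R0. apply Rdiv_lt_0_compat; [apply Rmult_lt_0_compat|]; lra. }
  destruct (Rlt_le_dec (g y / sqrt y) C) as [Hlt|Hge]; [exact Hlt|exfalso].
  pose proof ln2_pos.
  set (v := Rmin (Rmin (1/2) (C/2)) (y * ln 2 / 2)).
  assert (Hv1 : v <= 1/2) by (unfold v; eapply Rle_trans; [apply Rmin_l|apply Rmin_l]).
  assert (Hv0 : 0 < v).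
  { unfold v. apply Rmin_glb_lt; [apply Rmin_glb_lt|]; try lra.
    assert (0 < y * ln 2) by (apply Rmult_lt_0_compat; lra). lra. }
  assert (HvC : v < C).
  { assert (v <= C/2) by (unfold v; eapply Rle_trans; [apply Rmin_l|apply Rmin_r]). lra. }
  assert (Hvy : v < y * ln 2).
  { assert (v <= y * ln 2 / 2) by (unfold v; apply Rmin_r).
    assert (0 < y * ln 2) by (apply Rmult_lt_0_compat; lra). lra. }
  set (e := v / ln 2).
  assert (He0 : 0 < e) by (unfold e; apply Rdiv_lt_0_compat; lra).
  assert (Hev : e * ln 2 = v) by (unfold e; field; lra).
  assert (Hey : e < y).
  { apply (Rmult_lt_reg_r (ln 2)); lra. }
  assert (HGe : g e / sqrt e < C).
  { rewrite G_eq by lra. pose proof (G_small e He0 ltac:(lra)). lra. }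
  destruct (Req_dec (g y / sqrt y) C) as [Heq|Hne].
  - assert (y = c) by (apply Huniq; split; [lra|exact Heq]). lra.
  - destruct (Ranalysis5.IVT_interv (fun x => g x / sqrt x - C) e y) as [z [Hz Hfz]].
    + intros a Ha'. apply continuity_pt_minus; [apply G_cont; lra|apply continuity_pt_const; intros ? ?; reflexivity].
    + exact Hey.
    + cbv beta; lra.
    + cbv beta; destruct Hge as [Hg|Hg]; [lra|congruence].
    + cbv beta in Hfz. assert (z = c) by (apply Huniq; split; [lra|fold C; lra]). lra.
Qed.

Lemma W_deriv a rr rd rs K x : 0 < a -> 0 < rr -> 0 < rd -> 0 < rs -> 0 < K -> 0 < x ->
  is_derive (W a rr rd rs K) x
   (let E := Rpower 2 (x / K) in let S := sqrt (a * rr * K * (E - 1)) in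
    let D := 2 * S + K * (rr + rd) + rs in
    (D - x * (a * rr * K * ln 2 * E / K) / S) / (D * D)).
Proof.
  intros Ha Hr Hd Hs HK Hx.
  pose proof (pow2_gt1 (x / K) ltac:(apply Rdiv_lt_0_compat; lra)) as HE.
  pose proof (W_den_pos a rr rd rs K x Hr Hd Hs HK) as HD.
  assert (HS : 0 < sqrt (a * rr * K * (Rpower 2 (x / K) - 1))).
  { apply sqrt_lt_R0. repeat apply Rmult_lt_0_compat; lra. }
  unfold W. unfold Rpower in *. auto_derive.
  - set (E := exp (x / K * ln 2)) in *. change (exp (x * / K * ln 2)) with E.
    set (S := sqrt (a * rr * K * (E - 1))) in *. change (sqrt (a * rr * K * (E + - (1)))) with S.
    split; [change (0 < a * rr * K * (E - 1)); repeat apply Rmult_lt_0_compat; lra|split; [lra|exact I]].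
  - cbv zeta. set (E := exp (x / K * ln 2)) in *. change (exp (x * / K * ln 2)) with E.
    set (S := sqrt (a * rr * K * (E - 1))) in *. change (sqrt (a * rr * K * (E + - (1)))) with S.
    field. lra.
Qed.

Lemma W_incr a rr rd rs K c :
  0 < a -> 0 < rr -> 0 < rd -> 0 < rs -> 0 < K ->
  (forall y, 0 < y < c -> g y / sqrt y < (1 + rd / rr) * sqrt (K * rr / a)) ->
  forall x z, 0 < x -> x < z -> z < c * K -> W a rr rd rs K x < W a rr rd rs K z.
Proof.
  intros Ha Hr Hd Hs HK Hprop x z Hx Hxz Hz.
  apply (incr_function _ (Finite 0) (Finite (c * K))
    (fun x => let E := Rpower 2 (x / K) in let S := sqrt (a * rr * K * (E - 1)) in
    let D := 2 * S + K * (rr + rd) + rs in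
    (D - x * (a * rr * K * ln 2 * E / K) / S) / (D * D))); simpl; try lra.
  - intros t Ht _. apply W_deriv; lra.
  - intros t Ht Htc.
    set (y := t / K).
    assert (Hy : 0 < y < c).
    { unfold y; split; [apply Rdiv_lt_0_compat; lra|].
      apply (Rmult_lt_reg_r K); [lra|]. field_simplify; lra. }
    pose proof (Hprop y Hy) as Hp. rewrite G_eq in Hp by lra.
    unfold phi in Hp.
    set (E := Rpower 2 y) in *.
    pose proof (pow2_gt1 y ltac:(lra)) as HE. fold E in HE.
    set (t1 := sqrt (E - 1)).
    assert (Ht1 : 0 < t1) by (apply sqrt_lt_R0; lra).
    assert (Ht12 : t1 * t1 = E - 1) by (apply sqrt_sqrt; lra).
    set (sa := sqrt (a * rr * K)).
    assert (Hsa : 0 < sa) by (apply sqrt_lt_R0; repeat apply Rmult_lt_0_compat; lra).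
    assert (Hsa2 : sa * sa = a * rr * K) by (apply sqrt_sqrt; repeat apply Rmult_le_pos; lra).
    assert (HS : sqrt (a * rr * K * (E - 1)) = sa * t1) by (unfold sa, t1; apply sqrt_mult; [repeat apply Rmult_le_pos|]; lra).
    rewrite HS.
    set (C := (1 + rd / rr) * sqrt (K * rr / a)) in *.
    assert (HsaC : sa * C = K * (rr + rd)).
    { unfold C, sa. rewrite Rmult_comm, Rmult_assoc, <- sqrt_mult by
        (try apply Rdiv_le_0_compat; repeat apply Rmult_le_pos; lra).
      replace (K * rr / a * (a * rr * K)) with ((K * rr) ^ 2) by (field; lra).
      rewrite sqrt_pow2 by (apply Rmult_le_pos; lra). field. lra. }
    assert (Hphi : E * y * ln 2 - E + 1 < C * t1).
    { apply (Rmult_lt_reg_r (/ t1)); [apply Rinv_0_lt_compat; lra|].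
      replace (C * t1 * / t1) with C by (field; lra). exact Hp. }
    set (B := K * (rr + rd) + rs).
    assert (HB : K * (rr + rd) < B) by (unfold B; lra).
    replace (2 * (sa * t1) + K * (rr + rd) + rs) with (2 * (sa * t1) + B) by (unfold B; ring).
    assert (HD : 0 < 2 * (sa * t1) + B) by (assert (0 < K * (rr+rd)) by (apply Rmult_lt_0_compat; lra); nra).
    apply Rdiv_lt_0_compat; [|nra].
    replace (t * (a * rr * K * ln 2 * E / K) / (sa * t1)) with (y * (sa * sa) * ln 2 * E / (sa * t1))
      by (unfold y; rewrite Hsa2; field; split; lra).
    apply Rlt_Rminus.
    apply (Rmult_lt_reg_r (sa * t1)); [nra|].
    replace (y * (sa * sa) * ln 2 * E / (sa * t1) * (sa * t1)) with (y * (sa * sa) * ln 2 * E) by (field; lra).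
    (* y*A*ln2*E = A*(phi + E - 1) *)
    assert (H1 : sa * sa * (E * y * ln 2 - E + 1) < sa * sa * (C * t1)) by (apply Rmult_lt_compat_l; nra).
    assert (H2 : sa * sa * (C * t1) = sa * t1 * (K * (rr + rd))) by (rewrite <- HsaC; ring).
    assert (H3 : sa * t1 * (K * (rr + rd)) < sa * t1 * B) by (apply Rmult_lt_compat_l; nra).
    assert (H4 : 0 < sa * sa * (E - 1)) by nra.
    rewrite <- Ht12 in H4.
    nra.
Qed.

Lemma W_contK a rr rd rs Rt k : 0 < a -> 0 < rr -> 0 < rd -> 0 < rs -> 0 < Rt -> 0 < k ->
  continuity_pt (fun K => W a rr rd rs K Rt) k.
Proof.
  intros Ha Hr Hd Hs HR Hk.
  apply continuity_pt_filterlim.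
  apply (ex_derive_continuous (K:=R_AbsRing) (V:=R_NormedModule) (fun K => W a rr rd rs K Rt)).
  pose proof (pow2_gt1 (Rt / k) ltac:(apply Rdiv_lt_0_compat; lra)) as HE.
  pose proof (W_den_pos a rr rd rs k Rt Hr Hd Hs Hk) as HD.
  unfold W. unfold Rpower in *. auto_derive.
  set (E := exp (Rt / k * ln 2)) in *. change (exp (Rt * / k * ln 2)) with E.
  set (S := sqrt (a * rr * k * (E - 1))) in *. change (sqrt (a * rr * k * (E + - (1)))) with S.
  repeat split; try lra.
  change (0 < a * rr * k * (E - 1)); repeat apply Rmult_lt_0_compat; lra.
Qed.

Theorem lemma6 (alpha rho_r rho_d rho_s rho_0 T c R1 R2 : R) :
  1 < alpha -> 0 < rho_r -> 0 < rho_d -> 0 < rho_s -> 0 < rho_0 -> 1 < T ->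
  10 < Kmax rho_r rho_d rho_0 T ->
  (* c = c(Theta) is the unique positive solution of its defining equation *)
  c_eq alpha rho_r rho_d rho_0 T c ->
  (forall c', c_eq alpha rho_r rho_d rho_0 T c' -> c' = c) ->
  0 < R1 -> R1 < R2 -> R2 < c * Kmax rho_r rho_d rho_0 T ->
  rho_r < alpha / (1 + rho_d / rho_r) ^ 2 * (g R1 ^ 2 / R1) ->
  rho_r < alpha / (1 + rho_d / rho_r) ^ 2 * (g R2 ^ 2 / R2) ->
  Rbar_lt (zeta'_csi alpha rho_r rho_d rho_s rho_0 T R1)
          (zeta'_csi alpha rho_r rho_d rho_s rho_0 T R2).
Proof.
  intros Ha Hr Hd Hs H0 HT HK Hc Huniq HR1 HR12 HR2c _ _.
  set (Km := Kmax rho_r rho_d rho_0 T) in *.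
  destruct (continuity_ab_maj (fun K => W alpha rho_r rho_d rho_s K R1) 1 Km ltac:(lra)
     ltac:(intros; apply W_contK; lra)) as [Ks [HKs HKsr]].
  cbv beta in HKs.
  assert (Hub : Rbar_le (zeta'_csi alpha rho_r rho_d rho_s rho_0 T R1)
                        (Finite (W alpha rho_r rho_d rho_s Ks R1))).
  { unfold zeta'_csi. destruct (Lub_Rbar_correct (fun z => exists M K,
      1 <= K /\ K <= Kmax rho_r rho_d rho_0 T /\ K < M /\
      z = zeta_csi alpha rho_r rho_d rho_s M K R1)) as [_ Hl].
    apply Hl. intros z [M [K [HK1 [HK2 [HKM Hz]]]]]. simpl. subst z.
    apply Rle_trans with (W alpha rho_r rho_d rho_s K R1).
    - apply zeta_le_W; lra.
    - apply HKs. fold Km in HK2. lra. }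
  assert (Hlb : forall K2, 1 <= K2 -> K2 <= Km ->
     Rbar_le (Finite (W alpha rho_r rho_d rho_s K2 R2)) (zeta'_csi alpha rho_r rho_d rho_s rho_0 T R2)).
  { intros K2 HK21 HK22. unfold zeta'_csi. destruct (Lub_Rbar_correct (fun z => exists M K,
      1 <= K /\ K <= Kmax rho_r rho_d rho_0 T /\ K < M /\
      z = zeta_csi alpha rho_r rho_d rho_s M K R2)) as [Hu _].
    apply Hu. destruct (zeta_opt alpha rho_r rho_d rho_s K2 R2) as [M [HM HMeq]]; try lra.
    exists M, K2. repeat split; try lra. fold Km; lra. }
  set (t := R2 / R1).
  assert (Ht : 1 < t) by (unfold t; apply (Rmult_lt_reg_r R1); [lra|]; field_simplify; lra).
  assert (HtR : t * R1 = R2) by (unfold t; field; lra).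
  destruct (Rle_lt_dec (t * Ks) Km) as [Hc1|Hc2].
  - eapply Rbar_le_lt_trans; [exact Hub|].
    eapply Rbar_lt_le_trans; [|apply (Hlb (t * Ks)); nra].
    simpl. rewrite <- HtR.
    apply (W_scale alpha rho_r rho_d rho_s Ks R1 t); lra.
  - set (s := Km / Ks).
    assert (Hs1 : 1 <= s) by (unfold s; apply (Rmult_le_reg_r Ks); [lra|]; field_simplify; lra).
    assert (HsK : s * Ks = Km) by (unfold s; field; lra).
    assert (Hst : s < t) by (apply (Rmult_lt_reg_r Ks); lra).
    eapply Rbar_le_lt_trans; [exact Hub|].
    eapply Rbar_lt_le_trans; [|apply (Hlb Km); lra].
    simpl.
    apply Rle_lt_trans with (W alpha rho_r rho_d rho_s (s * Ks) (s * R1)).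
    + apply (W_scale alpha rho_r rho_d rho_s Ks R1 s); lra.
    + rewrite HsK. assert (Hcpos : 0 < c) by (destruct Hc; lra).
      apply (W_incr alpha rho_r rho_d rho_s Km c); try lra.
      * intros y Hy. apply (c_prop alpha rho_r rho_d rho_0 T c y); try lra; auto; fold Km; lra.
      * apply Rmult_lt_0_compat; lra.
      * rewrite <- HtR; apply Rmult_lt_compat_r; lra.
Qed.
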